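(* For all integers $n\geq 2$ and $m\geq 1$, $\mathrm{mbt}(K_{2n}\Box C_{2m+1})=\Delta(K_{2n}\Box C_{2m+1})+1=2n+2$.
   Context: A book embedding of a graph $G$ consists of a linear ordering of $V(G)$ (the vertices placed on the spine) together with an assignment of each edge to one of a set of pages such that no two edges on the same page cross, i.e. there are no two edges $uv$, $xy$ on the same page with $u<x<v<y$ in the ordering. A book embedding is matching if on every page each vertex is incident with at most one edge of that page. The matching book thickness $\mathrm{mbt}(G)$ is the minimum number of pages over all matching book embeddings of $G$. $\Delta(G)$ denotes the maximum degree of $G$. $K_r$ is the complete graph on $r$ vertices, $C_s$ the cycle on $s$ vertices. The Cartesian product $G\Box B$ has vertex set $V(G)\times V(B)$, with $(u_1,v_1)$ adjacent to $(u_2,v_2)$ iff either $u_1=u_2$ and $v_1v_2\in E(B)$, or $v_1=v_2$ and $u_1u_2\in E(G)$. *)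

(* Defs.v *)
(* Simple graphs are symmetric irreflexive relations on a finType. *)
From mathcomp Require Import all_boot.
Set Implicit Arguments. Unset Strict Implicit. Unset Printing Implicit Defensive.

Definition complete_rel (r : nat) : rel 'I_r := fun u v => u != v.

Definition cycle_rel (s : nat) : rel 'I_s :=
  fun i j => (j == (i.+1 %% s) :> nat) || (i == (j.+1 %% s) :> nat).

Definition cart_rel (T1 T2 : finType) (g : rel T1) (b : rel T2) : rel (T1 * T2) :=
  fun x y => ((x.1 == y.1) && b x.2 y.2) || ((x.2 == y.2) && g x.1 y.1).

Definition deg (V : finType) (e : rel V) (v : V) : nat := #|[set w | e v w]|.
Definition max_deg (V : finType) (e : rel V) : nat := \max_(v : V) deg e v.

(* A matching book embedding of e with k pages: a linear ordering of the
   vertices (injective position map pos into nat) and a page assignment pg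
   to each edge (given on ordered pairs, required symmetric on edges). *)
Definition matching_book_embedding (V : finType) (e : rel V) (k : nat)
    (pos : V -> nat) (pg : V -> V -> 'I_k) : Prop :=
  injective pos /\
  (forall u v, e u v -> pg u v = pg v u) /\
  (forall u v x y, e u v -> e x y -> pg u v = pg x y ->
     ~ [/\ pos u < pos x, pos x < pos v & pos v < pos y]) /\
  (forall u v w, e u v -> e u w -> pg u v = pg u w -> v = w).

Definition has_mbe (V : finType) (e : rel V) (k : nat) : Prop :=
  exists (pos : V -> nat) (pg : V -> V -> 'I_k), @matching_book_embedding V e k pos pg.

Definition is_mbt (V : finType) (e : rel V) (k : nat) : Prop :=
  has_mbe e k /\ (forall j, has_mbe e j -> k <= j).

(* Main.v *)
Require Import Defs.
From mathcomp Require Import all_boot zify.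
Set Implicit Arguments. Unset Strict Implicit. Unset Printing Implicit Defensive.

Definition inner (n i a : nat) := if odd i then (2*n).-1 - a else a.
Definition posn n (i a : nat) := i * (2*n) + inner n i a.
Definition r1 n s := if s < (2*n).+1 then s else s - (2*n).+1.
Definition r0 n s := if s < 2*n then s else s - 2*n.
Definition kcol n m i s :=
  if i == 0 then r1 n s
  else if i == 2*m then (if s == (2*n).-1 then (2*n).+1 else r1 n s)
  else (if s == (2*n).-1 then 2*n else r0 n s).
Definition wcol n a := if a == 0 then 2*n else a.-1.
Definition ccol n m a i j :=
  if ((i == 0) && (j == 2*m)) || ((i == 2*m) && (j == 0)) then wcol n a
  else if odd (minn i j) then (2*n).-1 else (2*n).+1.
Definition coln n m a i b j := if i == j then kcol n m i (a+b) else ccol n m a i j.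
Definition enat (m a i b j : nat) : Prop :=
  (i = j /\ a <> b) \/
  (a = b /\ (j = i.+1 \/ i = j.+1 \/ (i = 0 /\ j = 2*m) \/ (i = 2*m /\ j = 0))).

Ltac crunch := rewrite ?/coln ?/ccol ?/kcol ?/wcol ?/posn ?/inner ?/r1 ?/r0;
  repeat (case: ifP => ?); lia.

Lemma inner_lt n i a : a < 2*n -> inner n i a < 2*n.
Proof. crunch. Qed.

Lemma posn_lt n i a k c : a < 2*n -> c < 2*n ->
  (posn n i a < posn n k c) <-> (i < k \/ (i = k /\ inner n i a < inner n k c)).
Proof.
move=> ha hc; have h1 := inner_lt i ha; have h2 := inner_lt k hc.
rewrite /posn.
have [ik|ik|ik] := ltngtP i k.
- have : (i.+1) * (2*n) <= k * (2*n) by rewrite leq_mul2r ik orbT.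
  lia.
- have : (k.+1) * (2*n) <= i * (2*n) by rewrite leq_mul2r ik orbT.
  lia.
- subst; lia.
Qed.

Lemma parallel n m i a b c d : a < 2*n -> b < 2*n -> c < 2*n -> d < 2*n ->
  inner n i a < inner n i c -> inner n i c < inner n i b -> inner n i b < inner n i d ->
  kcol n m i (a+b) = kcol n m i (c+d) -> False.
Proof. crunch. Qed.


Lemma KC1 n m i s c : 1 <= n -> i < 2*m -> s <= 4*n-2 ->
  kcol n m i s = ccol n m c i i.+1 -> False.
Proof. crunch. Qed.

Lemma CK1 n m i s c : 1 <= n -> 1 <= m -> i < 2*m -> s <= 4*n-2 ->
  kcol n m i.+1 s = ccol n m c i i.+1 -> False.
Proof. crunch. Qed.

Lemma strad0 n m a b c : 1 <= n -> 1 <= m -> b < 2*n -> a < c -> c < b ->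
  kcol n m 0 (a+b) = ccol n m c 0 (2*m) -> False.
Proof. crunch. Qed.

Lemma strad2 n m a b c : 1 <= n -> 1 <= m -> b < 2*n -> a < c -> c < b ->
  kcol n m (2*m) (a+b) = ccol n m c 0 (2*m) -> False.
Proof. crunch. Qed.

Lemma CC1 n m a c i k : 1 <= n -> 1 <= m -> i < 2*m -> k < 2*m ->
  ccol n m a i i.+1 = ccol n m c k k.+1 -> odd i = odd k.
Proof. crunch. Qed.

Lemma CCw n m a c k : 1 <= n -> 1 <= m -> a < 2*n -> k < 2*m ->
  ccol n m a 0 (2*m) = ccol n m c k k.+1 -> False.
Proof. crunch. Qed.

Lemma CCww n m a c : 1 <= n -> 1 <= m -> a < 2*n -> c < 2*n ->
  ccol n m a 0 (2*m) = ccol n m c 0 (2*m) -> a = c.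
Proof. crunch. Qed.

Lemma inner_even n i a : ~~ odd i -> inner n i a = a.
Proof. by rewrite /inner => /negbTE ->. Qed.

Lemma nocross n m a i b j c k d l : 1 <= n -> 1 <= m ->
  a < 2*n -> b < 2*n -> c < 2*n -> d < 2*n ->
  i < (2*m).+1 -> j < (2*m).+1 -> k < (2*m).+1 -> l < (2*m).+1 ->
  enat m a i b j -> enat m c k d l -> coln n m a i b j = coln n m c k d l ->
  posn n i a < posn n k c -> posn n k c < posn n j b -> posn n j b < posn n l d -> False.
Proof.
move=> hn hm ha hb hc hd hi hj hk hl E1 E2 Hc.
move/(posn_lt i k ha hc) => P1 /(posn_lt k j hc hb) P2 /(posn_lt j l hb hd) P3.
case: E1 => [[ij ab]|[ab E1]]; case: E2 => [[kl cd]|[cd E2]].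
- subst j l. have ? : k = i by lia. subst k.
  move: Hc; rewrite /coln !eqxx => Hc.
  apply: (parallel ha hb hc hd _ _ _ Hc); lia.
- subst j d. have ? : k = i by lia. subst k.
  move: Hc; rewrite /coln eqxx => Hc.
  rewrite (_ : (i == l) = false) in Hc; last by lia.
  have [?|[? ?]] : l = i.+1 \/ (i = 0 /\ l = 2*m) by lia.
  + subst; apply: (KC1 hn _ _ Hc); lia.
  + subst; apply: (strad0 hn hm hb _ _ Hc); move: P1 P2; rewrite !inner_even //; lia.
- subst l b. have ? : k = j by lia. subst k.
  move: Hc; rewrite /coln eqxx => Hc.
  rewrite (_ : (i == j) = false) in Hc; last by lia.
  have [?|[? ?]] : j = i.+1 \/ (i = 0 /\ j = 2*m) by lia.
  + subst; apply: (CK1 hn hm _ _ (esym Hc)); lia.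
  + subst; apply: (strad2 hn hm hd _ _ (esym Hc)); move: P2 P3;
    rewrite !inner_even ?odd_double //; lia.
- subst b d.
  move: Hc; rewrite /coln.
  rewrite (_ : (i == j) = false); last by lia.
  rewrite (_ : (k == l) = false); last by lia.
  move=> Hc.
  have [el|[ek el]] : l = k.+1 \/ (k = 0 /\ l = 2*m) by lia.
  all: have [ej|[ei ej]] : j = i.+1 \/ (i = 0 /\ j = 2*m) by lia.
  + subst j l.
    have Ho : odd i = odd k by apply: (CC1 hn hm _ _ Hc); lia.
    have ? : k = i by lia. subst k.
    move: P1 P3; rewrite /inner /=; case: (odd i) => /=; lia.
  + subst i j l. apply: (CCw hn hm ha _ Hc); lia.
  + subst j k l. apply: (CCw hn hm hc _ (esym Hc)); lia.
  + subst i j k l. have ? := CCww hn hm ha hc Hc; subst; lia.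
Qed.


Lemma inner_inj n i a b : a < 2*n -> b < 2*n -> inner n i a = inner n i b -> a = b.
Proof. crunch. Qed.

Lemma coln_sym n m a i b j : enat m a i b j -> coln n m a i b j = coln n m b j a i.
Proof. rewrite /enat; crunch. Qed.

Lemma coln_lt n m a i b j : 1 <= n -> a < 2*n -> b < 2*n -> coln n m a i b j < (2*n+1).+1.
Proof. crunch. Qed.

Lemma KK_m n m a i b c : 1 <= n -> a < 2*n -> b < 2*n -> c < 2*n ->
  kcol n m i (a+b) = kcol n m i (a+c) -> b = c.
Proof. crunch. Qed.

Lemma KC_m n m a i b k : 1 <= n -> 1 <= m -> a < 2*n -> b < 2*n -> a <> b ->
  i < (2*m).+1 -> k < (2*m).+1 ->
  (k = i.+1 \/ i = k.+1 \/ (i = 0 /\ k = 2*m) \/ (i = 2*m /\ k = 0)) ->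
  kcol n m i (a+b) = ccol n m a i k -> False.
Proof. crunch. Qed.

Lemma CC_m n m a i j k : 1 <= n -> 1 <= m -> a < 2*n ->
  i < (2*m).+1 -> j < (2*m).+1 -> k < (2*m).+1 ->
  (j = i.+1 \/ i = j.+1 \/ (i = 0 /\ j = 2*m) \/ (i = 2*m /\ j = 0)) ->
  (k = i.+1 \/ i = k.+1 \/ (i = 0 /\ k = 2*m) \/ (i = 2*m /\ k = 0)) ->
  ccol n m a i j = ccol n m a i k -> j = k.
Proof. crunch. Qed.

Lemma match_nat n m a i b j c k : 1 <= n -> 1 <= m ->
  a < 2*n -> b < 2*n -> c < 2*n ->
  i < (2*m).+1 -> j < (2*m).+1 -> k < (2*m).+1 ->
  enat m a i b j -> enat m a i c k -> coln n m a i b j = coln n m a i c k -> b = c /\ j = k.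
Proof.
move=> hn hm ha hb hc hi hj hk E1 E2.
case: E1 => [[ij ab]|[ab E1]]; case: E2 => [[ik ac]|[ac E2]].
- subst j k; rewrite /coln !eqxx => H; split=> //; exact: KK_m hn ha hb hc H.
- subst j c; rewrite /coln eqxx (_ : (i == k) = false); last by lia.
  move=> H; exfalso; exact: KC_m hn hm ha hb ab hi hk E2 H.
- subst k b; rewrite /coln eqxx (_ : (i == j) = false); last by lia.
  move=> H; exfalso; exact: KC_m hn hm ha hc ac hi hj E1 (esym H).
- subst b c; rewrite /coln (_ : (i == j) = false); last by lia.
  rewrite (_ : (i == k) = false); last by lia.
  move=> H; split=> //; exact: CC_m hn hm ha hi hj hk E1 E2 H.
Qed.


Lemma invol_even (T : finType) (f : T -> T) k (S : {set T}) :
  #|S| = k -> {in S, forall x, f x \in S /\ f x != x /\ f (f x) = x} -> ~~ odd k.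
Proof.
elim/ltn_ind: k S => k IH S hk hf.
case: (posnP k) => [->//|k0].
have : 0 < #|S| by rewrite hk.
case/card_gt0P => x xS.
have [fxS [fxx ffx]] := hf x xS.
set S' := S :\ x :\ f x.
have fx1 : f x \in S :\ x by rewrite !inE fxx.
have c1 : #|S| = (#|S'|).+2.
  by rewrite (cardsD1 x S) xS (cardsD1 (f x) (S :\ x)) fx1.
have hf' : {in S', forall y, f y \in S' /\ f y != y /\ f (f y) = y}.
  move=> y; rewrite /S' !inE => /and3P [yfx yx yS].
  have [fyS [fyy ffy]] := hf y yS.
  split; last by split.
  rewrite fyS andbT; apply/andP; split.
  - apply/eqP => E; move/eqP: yx; apply; by rewrite -ffy E ffx.
  - apply/eqP => E; move/eqP: yfx; apply; by rewrite -ffy E.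
have lt : #|S'| < k by rewrite -hk c1.
have := IH _ lt S' erefl hf'.
by rewrite -hk c1 /= negbK.
Qed.

Lemma deg_le_pages (V : finType) (e : rel V) j : has_mbe e j -> forall v, deg e v <= j.
Proof.
case=> pos [pg [inj [sym [nc mt]]]] v.
rewrite /deg -(card_in_imset (f := pg v)); last first.
  move=> a b; rewrite !inE => ha hb E; exact: mt ha hb E.
by apply: leq_trans (max_card _) _; rewrite card_ord.
Qed.

Lemma no_reg_mbe (V : finType) (e : rel V) j :
  symmetric e -> irreflexive e -> (forall v, deg e v = j) ->
  forall x y z, e x y -> e y z -> e x z -> ~ has_mbe e j.
Proof.
move=> esy irr reg x y z exy eyz exz [pos [pg [inj [sym [nc mt]]]]].
have cover : forall u (p : 'I_j), exists w, e u w /\ pg u w = p.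
  move=> u p.
  have E : pg u @: [set w | e u w] = setT.
    have ij : {in [set w | e u w] &, injective (pg u)}.
      move=> a b; rewrite !inE => ha hb; exact: mt ha hb.
    apply/eqP; rewrite eqEcard subsetT cardsT card_ord (card_in_imset ij).
    by have := reg u; rewrite /deg /= => ->.
  have : p \in pg u @: [set w | e u w] by rewrite E inE.
  case/imsetP => w; rewrite inE => euw ->; by exists w.
pose rk := fun w => #|[set z | pos z < pos w]|.
have key : forall u v, e u v -> pos u < pos v -> odd (rk v) = ~~ odd (rk u).
  move=> u v euv lt.
  pose p := pg u v.
  pose S := [set w | pos u < pos w < pos v].
  pose f w := if [pick w' | e w w' && (pg w w' == p)] is Some w' then w' else w.
  have fP : forall w, e w (f w) /\ pg w (f w) = p.
    move=> w; rewrite /f; case: pickP => [w' /andP [h1 /eqP h2]|none] //.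
    have [w' [h1 h2]] := cover w p. have := none w'. by rewrite h1 h2 eqxx.
  have hS : {in S, forall w, f w \in S /\ f w != w /\ f (f w) = w}.
    move=> w; rewrite inE => /andP [lt1 lt2].
    have [e1 p1] := fP w.
    have e1' : e (f w) w by rewrite esy.
    have p1' : pg (f w) w = p by rewrite -(sym _ _ e1).
    split; last split.
    - rewrite inE; apply/andP; split.
      + case: (ltngtP (pos u) (pos (f w))) => // H.
        * exfalso. apply: (nc (f w) w u v e1' euv p1'). by split.
        * exfalso. have := inj _ _ H => E. rewrite -E in e1' p1'.
          have Ew := mt u w v e1' euv p1'.
          by rewrite Ew ltnn in lt2.
      + case: (ltngtP (pos (f w)) (pos v)) => // H.
        * exfalso. apply: (nc u v w (f w) euv e1 (esym p1)). by split.
        * exfalso. have := inj _ _ H => E. rewrite E in e1 p1.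
          have evw : e v w by rewrite esy.
          have evu : e v u by rewrite esy.
          have Ew : w = u.
            apply: (mt v w u evw evu). by rewrite -(sym _ _ e1) p1 -(sym _ _ euv).
          by rewrite Ew ltnn in lt1.
    - apply/eqP => E. by rewrite E irr in e1.
    - have [e2 p2] := fP (f w). apply: (mt (f w) _ w e2 e1'). by rewrite p2 p1'.
  have ev := invol_even erefl hS.
  have crk : rk v = (rk u + #|S|).+1.
    rewrite /rk -(cardsID [set z | pos z < pos u] [set z | pos z < pos v]).
    have E1 : [set z | pos z < pos v] :&: [set z | pos z < pos u] = [set z | pos z < pos u].
      apply/setP => t; rewrite !inE; lia.
    have E2 : [set z | pos z < pos v] :\: [set z | pos z < pos u] = u |: S.
      apply/setP => t; rewrite !inE.
      have ez : (t == u) = (pos t == pos u) by apply/eqP/eqP => [->|/inj].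
      rewrite ez; lia.
    rewrite E1 E2 cardsU1 inE ltnn /=; lia.
  by rewrite crk /= oddD (negbTE ev) addbF.
have key2 : forall u v, e u v -> odd (rk u) != odd (rk v).
  move=> u v euv; case: (ltngtP (pos u) (pos v)) => H.
  - by rewrite (key u v euv H); case: (odd _).
  - have evu : e v u by rewrite esy.
    by rewrite (key v u evu H); case: (odd _).
  - have E := inj _ _ H. by rewrite E irr in euv.
move: (key2 _ _ exy) (key2 _ _ eyz) (key2 _ _ exz).
by case: (odd (rk x)); case: (odd (rk y)); case: (odd (rk z)).
Qed.


Lemma modS_spec M i : i < M -> (i.+1 < M /\ i.+1 %% M = i.+1) \/ (i.+1 = M /\ i.+1 %% M = 0).
Proof.
move=> h; case: (ltngtP i.+1 M) => H.
- by left; rewrite modn_small.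
- lia.
- by right; rewrite H modnn.
Qed.

Lemma cyc_nat m (i j : 'I_(2*m+1)) : cycle_rel i j =
  ((j:nat) == i.+1) || ((i == 2*m :> nat) && (j == 0 :> nat)) ||
  ((i:nat) == j.+1) || ((j == 2*m :> nat) && (i == 0 :> nat)).
Proof.
rewrite /cycle_rel.
have := modS_spec (ltn_ord i); have := modS_spec (ltn_ord j).
move: (i.+1 %% (2*m+1)) (j.+1 %% (2*m+1)) => x y; lia.
Qed.


Lemma e_enat n m (u v : 'I_(2*n) * 'I_(2*m+1)) :
  cart_rel (@complete_rel (2*n)) (@cycle_rel (2*m+1)) u v -> enat m u.1 u.2 v.1 v.2.
Proof.
case: u v => a i [b j]; rewrite /cart_rel /complete_rel /= cyc_nat /enat -!val_eqE /= => H.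
lia.
Qed.

Lemma deg_val n m (hn : 1 <= n) (hm : 1 <= m) (v : 'I_(2*n) * 'I_(2*m+1)) :
  deg (cart_rel (@complete_rel (2*n)) (@cycle_rel (2*m+1))) v = (2*n).+1.
Proof.
case: v => a i.
have hs : (if i == 2*m :> nat then 0 else i.+1) < 2*m+1.
  have := ltn_ord i; case: ifP => ?; lia.
have hp : (if i == 0 :> nat then 2*m else i.-1) < 2*m+1.
  have := ltn_ord i; case: ifP => ?; lia.
pose s := Ordinal hs. pose p := Ordinal hp.
have sp : s != p.
  rewrite -val_eqE /=; have := ltn_ord i; repeat case: ifP => ?; lia.
have E : [set w | cart_rel (@complete_rel (2*n)) (@cycle_rel (2*m+1)) (a, i) w] =
   setX [set a] [set s; p] :|: setX [set~ a] [set i].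
  apply/setP => -[b j]; rewrite !inE /cart_rel /complete_rel /= cyc_nat -!val_eqE /=.
  have := ltn_ord i; have := ltn_ord j; repeat case: ifP => ?; lia.
have D : setX [set a] [set s; p] :&: setX [set~ a] [set i] = set0.
  apply/setP => -[b j]; rewrite !inE /=; by case: (b == a); rewrite ?andbF.
rewrite /deg E cardsU D cards0 subn0 !cardsX !cards1 cards2 sp cardsC1 card_ord /=.
lia.
Qed.

Lemma maxdeg_val n m (hn : 1 <= n) (hm : 1 <= m) :
  max_deg (cart_rel (@complete_rel (2*n)) (@cycle_rel (2*m+1))) = (2*n).+1.
Proof.
have h0 : 0 < 2*n by lia.
have h1 : 0 < 2*m+1 by lia.
apply/eqP; rewrite eqn_leq; apply/andP; split.
- by apply/bigmax_leqP => v _; rewrite deg_val.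
- by rewrite -(deg_val hn hm (Ordinal h0, Ordinal h1)) leq_bigmax.
Qed.

Lemma mbe_constr n m (hn : 1 <= n) (hm : 1 <= m) :
  has_mbe (cart_rel (@complete_rel (2*n)) (@cycle_rel (2*m+1))) (2*n+1).+1.
Proof.
exists (fun u : 'I_(2*n) * 'I_(2*m+1) => posn n u.2 u.1).
exists (fun u v : 'I_(2*n) * 'I_(2*m+1) =>
  (inord (coln n m u.1 u.2 v.1 v.2) : 'I_(2*n+1).+1)).
have bnd : forall (u : 'I_(2*m+1)), (u : nat) < (2*m).+1.
  move=> u; have := ltn_ord u; lia.
split; [|split; [|split]].
- move=> [a i] [b j] /= H.
  have L1 := posn_lt i j (ltn_ord a) (ltn_ord b).
  have L2 := posn_lt j i (ltn_ord b) (ltn_ord a).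
  have ij : (i : nat) = j by lia.
  have hin : inner n i a = inner n j b by lia.
  rewrite -ij in hin.
  have ab := inner_inj (ltn_ord a) (ltn_ord b) hin.
  by congr pair; apply: val_inj.
- move=> u v euv; congr inord; apply: coln_sym; exact: e_enat.
- move=> [a i] [b j] [c k] [d l] euv exy /= H [h1 h2 h3].
  have hc : coln n m a i b j = coln n m c k d l.
    by move/(congr1 val): H; rewrite /= !inordK // coln_lt.
  exact: (nocross hn hm (ltn_ord a) (ltn_ord b) (ltn_ord c) (ltn_ord d)
     (bnd i) (bnd j) (bnd k) (bnd l) (e_enat euv) (e_enat exy) hc h1 h2 h3).
- move=> [a i] [b j] [c k] euv euw /= H.
  have hc : coln n m a i b j = coln n m a i c k.
    by move/(congr1 val): H; rewrite /= !inordK // coln_lt.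
  have [bc jk] := match_nat hn hm (ltn_ord a) (ltn_ord b) (ltn_ord c)
     (bnd i) (bnd j) (bnd k) (e_enat euv) (e_enat euw) hc.
  by congr pair; apply: val_inj.
Qed.

Theorem lemma2p4 (n m : nat) (hn : 2 <= n) (hm : 1 <= m) :
  let e := cart_rel (@complete_rel (2 * n)) (@cycle_rel (2 * m + 1)) in
  is_mbt e (max_deg e + 1) /\ max_deg e + 1 = 2 * n + 2.
Proof.
move=> e.
have hn1 : 1 <= n by lia.
have md : max_deg e = (2*n).+1 := maxdeg_val hn1 hm.
rewrite md; split; last by lia.
have esy : symmetric e.
  move=> [a i] [b j]; rewrite /e /cart_rel /complete_rel /= !cyc_nat -!val_eqE /=; lia.
have eirr : irreflexive e.
  move=> [a i]; rewrite /e /cart_rel /complete_rel /= !cyc_nat -!val_eqE /=; lia.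
have h0 : 0 < 2*n by lia.
have h1 : 1 < 2*n by lia.
have h2 : 2 < 2*n by lia.
have hi : 0 < 2*m+1 by lia.
pose x := (Ordinal h0, Ordinal hi). pose y := (Ordinal h1, Ordinal hi).
pose z := (Ordinal h2, Ordinal hi).
have exy : e x y by rewrite /e /cart_rel /complete_rel /= ?cyc_nat -?val_eqE //=; lia.
have eyz : e y z by rewrite /e /cart_rel /complete_rel /= ?cyc_nat -?val_eqE //=; lia.
have exz : e x z by rewrite /e /cart_rel /complete_rel /= ?cyc_nat -?val_eqE //=; lia.
split.
- rewrite (_ : (2*n).+1 + 1 = (2*n+1).+1); last by lia.
  exact: mbe_constr.
- move=> j hj.
  have dl := deg_le_pages hj x.
  rewrite /e deg_val // in dl.
  case: (ltngtP j (2*n).+1) => H; first by lia.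
  + by lia.
  + exfalso; apply: (no_reg_mbe esy eirr _ exy eyz exz) => [v|].
    * by rewrite /e deg_val.
    * by rewrite -H.
Qed.
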